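(* Let $q\ge2$ and let $f$ be a $(q^2-1,1)$-coloring of $H(q+1,q)$ whose color-$1$ class is a $1$-perfect code and whose color-$2$ class can be partitioned into lines. Then for every positive integer $p$ and every $t\in\{0,\dots,p-1\}$ there exists a $\big((q^2-1)(p-t),\ (q^2-1)t+p\big)$-coloring of $H(q+1,pq)$; its main eigenvalue is $q(p-1)-1$.
   Context: The Hamming graph $H(n,q)$ has vertex set $\mathbb{Z}_q^n$, two vertices adjacent iff they differ in exactly one coordinate. A line ($1$-face) is a set of $q$ vertices obtained by fixing all coordinates but one. A $(b,c)$-coloring of $H(n,q)$ is a surjective map onto $\{1,2\}$ in which each color-1 vertex has exactly $b$ neighbours of color 2 and each color-2 vertex has exactly $c$ neighbours of color 1; its main eigenvalue is $n(q-1)-(b+c)$. A $1$-perfect code is a set $C$ of vertices such that every radius-$1$ Hamming ball contains exactly one element of $C$. *)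

(* Defs.v *)
From mathcomp Require Import all_boot all_order all_algebra.
Set Implicit Arguments. Unset Strict Implicit. Unset Printing Implicit Defensive.

Notation hvert n q := {ffun 'I_n -> 'I_q}.

Definition hdist n q (x y : hvert n q) : nat := #|[set i | x i != y i]|.

Definition hadj n q (x y : hvert n q) : bool := hdist x y == 1.

Definition color1 := true.
Definition color2 := false.

Definition is_bc_coloring n q (f : hvert n q -> bool) (b c : nat) : Prop :=
  [/\ (exists x, f x = color1), (exists x, f x = color2),
      (forall x, f x = color1 -> #|[set y | hadj x y & f y == color2]| = b)
    & (forall x, f x = color2 -> #|[set y | hadj x y & f y == color1]| = c)].

Definition main_eigenvalue (n q b c : nat) : int :=
  (n%:Z * (q%:Z - 1) - (b%:Z + c%:Z))%R.

Definition ball1 n q (x : hvert n q) : {set hvert n q} :=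
  [set y | hdist x y <= 1].

Definition perfect_code1 n q (C : {set hvert n q}) : Prop :=
  forall x : hvert n q, #|ball1 x :&: C| = 1.

Definition hline n q (i : 'I_n) (x : hvert n q) : {set hvert n q} :=
  [set y : hvert n q | [forall j, (j != i) ==> (y j == x j)]].

Definition is_line n q (L : {set hvert n q}) : Prop :=
  exists i x, L = hline i x.

Definition line_partitionable n q (S : {set hvert n q}) : Prop :=
  exists P : {set {set hvert n q}},
    partition P S /\ forall L, L \in P -> is_line L.

Definition color_class n q (f : hvert n q -> bool) (col : bool)
  : {set hvert n q} := [set x | f x == col].

(* Main.v *)
Require Import Defs.
From mathcomp Require Import all_boot all_order all_algebra.
From mathcomp Require Import zify.
Set Implicit Arguments. Unset Strict Implicit. Unset Printing Implicit Defensive.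

Definition upd n m (y : hvert n m) (j : 'I_n) (v : 'I_m) : hvert n m :=
  [ffun k => if k == j then v else y k].

Lemma upd_inj n m (y : hvert n m) j : injective (upd y j).
Proof. by move=> v w h; have := congr1 (fun z : hvert n m => z j) h; rewrite !ffunE eqxx. Qed.

Lemma upd_diff n m (y : hvert n m) j v : v != y j ->
  [set i | y i != upd y j v i] = [set j].
Proof.
move=> hv; apply/setP => i; rewrite !inE ffunE.
by case: (eqVneq i j) => [->|]; [rewrite eq_sym hv | rewrite eqxx].
Qed.

Lemma hadj_upd n m (y : hvert n m) j v : v != y j -> hadj y (upd y j v).
Proof. by move=> hv; rewrite /hadj /hdist upd_diff // cards1. Qed.

Lemma hadj_sum n m (y z : hvert n m) : hadj y z -> \sum_(i < n) (z i != y i) = 1.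
Proof.
rewrite /hadj /hdist => /eqP <-; rewrite -sum1_card [RHS]big_mkcond /=.
by apply: eq_bigr => i _; rewrite inE eq_sym; case: (_ != _).
Qed.

Lemma hadj_eq_upd n m (y z : hvert n m) j : hadj y z -> z j != y j -> z = upd y j (z j).
Proof.
rewrite /hadj /hdist => /cards1P [k hk] hj.
have : j \in [set i | y i != z i] by rewrite inE eq_sym.
rewrite hk inE => /eqP ejk.
apply/ffunP => i; rewrite ffunE; case: (eqVneq i j) => [->//|hij].
apply/eqP; apply: contraNT hij => hne.
have : i \in [set i | y i != z i] by rewrite inE eq_sym.
by rewrite hk inE ejk.
Qed.

Lemma nbr_count n m (y : hvert n m) (P : pred (hvert n m)) :
  #|[set z | hadj y z & P z]| =
  \sum_(j < n) #|[set v : 'I_m | (v != y j) && P (upd y j v)]|.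
Proof.
rewrite -sum1_card.
transitivity (\sum_(z in [set z | hadj y z & P z]) \sum_(j < n) (z j != y j : nat)).
  apply: eq_bigr => z; rewrite inE => /andP [hz _]; by rewrite hadj_sum.
rewrite exchange_big /=; apply: eq_bigr => j _.
transitivity (#|[set z | [&& hadj y z, P z & z j != y j]]|).
  rewrite -sum1_card [RHS]big_mkcond [LHS]big_mkcond /=.
  apply: eq_bigr => z _; rewrite !inE; by case: (hadj y z); case: (P z); case: (z j != y j).
rewrite -(card_imset _ (@upd_inj n m y j)); apply: eq_card => z.
rewrite !inE; apply/idP/imsetP.
  case/and3P => ha hP hj; exists (z j); last exact: hadj_eq_upd.
  by rewrite inE hj -(hadj_eq_upd ha hj).
case=> v; rewrite inE => /andP [hv hP] ->.
by rewrite hadj_upd // hP ffunE eqxx hv.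
Qed.
Lemma card_lt_ord p t : t <= p -> #|[set e : 'I_p | e < t]| = t.
Proof.
move=> htp.
have -> : [set e : 'I_p | e < t] = widen_ord htp @: [set: 'I_t].
  apply/setP => e; rewrite inE; apply/idP/imsetP.
    by move=> het; exists (Ordinal het) => //; apply: val_inj.
  by case=> e' _ ->; rewrite /= ltn_ord.
by rewrite card_imset ?cardsT ?card_ord //; by move=> a b /(congr1 val) /= /val_inj.
Qed.

Lemma card_shift p t c : t <= p -> #|[set d : 'I_p | (c + d) %% p < t]| = t.
Proof.
case: p => [|p'] htp.
  by rewrite leqn0 in htp; rewrite (eqP htp); apply/eqP; rewrite cards_eq0; apply/eqP/setP => -[d hd].
pose phi (d : 'I_p'.+1) : 'I_p'.+1 := Ordinal (ltn_pmod (c + d) (ltn0Sn p')).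
have phi_inj : injective phi.
  move=> a b /(congr1 val) /= /eqP; rewrite eqn_modDl !modn_small ?ltn_ord // => /eqP.
  exact: val_inj.
rewrite -[RHS](card_lt_ord htp) -(card_preimset [set e : 'I_p'.+1 | e < t] phi_inj).
by apply: eq_card => d; rewrite !inE.
Qed.

Lemma card_shiftC p t c : t <= p -> #|[set d : 'I_p | ~~ ((c + d) %% p < t)]| = p - t.
Proof.
move=> htp; have h := cardsC [set d : 'I_p | (c + d) %% p < t].
rewrite card_shift // card_ord in h.
have -> : [set d : 'I_p | ~~ ((c + d) %% p < t)] = ~: [set d : 'I_p | (c + d) %% p < t].
  by apply/setP => d; rewrite !inE.
lia.
Qed.

Lemma card_shift1 p t c (d0 : 'I_p) : t <= p -> ~~ ((c + d0) %% p < t) ->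
  #|[set d : 'I_p | (d != d0) && ((c + d) %% p < t)]| = t.
Proof.
move=> htp h0; rewrite -[RHS](card_shift c htp); apply: eq_card => d; rewrite !inE.
by case: (eqVneq d d0) => [->|]; [rewrite (negbTE h0)|].
Qed.

Definition res p q (hq : 0 < q) (v : 'I_(p * q)) : 'I_q := Ordinal (ltn_pmod v hq).

Lemma mk_lt p q (r : 'I_q) (d : 'I_p) : d * q + r < p * q.
Proof. have := ltn_ord r; have := ltn_ord d; nia. Qed.

Definition mk p q (r : 'I_q) (d : 'I_p) : 'I_(p * q) := Ordinal (mk_lt r d).

Lemma res_mk p q (hq : 0 < q) r (d : 'I_p) : res hq (mk r d) = r.
Proof. by apply: val_inj; rewrite /= modnMDl modn_small. Qed.

Lemma quo_mk p q (hq : 0 < q) (r : 'I_q) (d : 'I_p) : (mk r d : nat) %/ q = d.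
Proof. by rewrite /= divnMDl // divn_small // addn0. Qed.

Lemma mk_inj p q (r : 'I_q) : injective (@mk p q r).
Proof.
move=> a b /(congr1 val) /= /eqP; rewrite eqn_add2r eqn_mul2r.
case: q r => [[]//|q r] /= /eqP; exact: val_inj.
Qed.

Lemma count_by_res p q (hq : 0 < q) (P : pred 'I_(p * q)) :
  #|[set v | P v]| = \sum_(r : 'I_q) #|[set d : 'I_p | P (mk r d)]|.
Proof.
rewrite -sum1_card (partition_big (res hq) xpredT) //=.
apply: eq_bigr => r _.
rewrite -(card_imset _ (@mk_inj p q r)) -sum1_card; apply: eq_bigl => v.
rewrite !inE; apply/andP/imsetP.
  case=> hP /eqP hr.
  have hd : v %/ q < p by rewrite ltn_divLR // mulnC; exact: ltn_ord.
  have hv : v = mk r (Ordinal hd).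
    by apply: val_inj; rewrite /= -hr /= -divn_eq.
  by exists (Ordinal hd); rewrite // inE -hv.
case=> d; rewrite inE => hP ->; split=> //; by rewrite res_mk.
Qed.

Lemma upd_id n m (x : hvert n m) j : upd x j (x j) = x.
Proof. by apply/ffunP => k; rewrite ffunE; case: eqP => // ->. Qed.

Lemma upd_agree n m (x : hvert n m) j r k : k != j -> upd x j r k = x k.
Proof. by rewrite ffunE => /negbTE ->. Qed.

Lemma quo_lt p q (hq : 0 < q) (v : 'I_(p * q)) : v %/ q < p.
Proof. by rewrite ltn_divLR. Qed.

Definition quo p q (hq : 0 < q) (v : 'I_(p * q)) : 'I_p := Ordinal (quo_lt hq v).

Lemma mk_res_quo p q (hq : 0 < q) (v : 'I_(p * q)) : mk (res hq v) (quo hq v) = v.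
Proof. by apply: val_inj; rewrite /= -divn_eq. Qed.

Lemma card_shiftC1 p t c (d0 : 'I_p) : t <= p -> (c + d0) %% p < t ->
  #|[set d : 'I_p | (d != d0) && ~~ ((c + d) %% p < t)]| = p - t.
Proof.
move=> htp h0; rewrite -[RHS](card_shiftC c htp); apply: eq_card => d; rewrite !inE.
by case: (eqVneq d d0) => [->|]; [rewrite h0|].
Qed.

Lemma sum_if_card (T : finType) (A : pred T) (c k : nat) :
  \sum_(r : T) (if A r then c else k) = c * #|[set r | A r]| + k * (#|T| - #|[set r | A r]|).
Proof.
rewrite (bigID A) /=.
rewrite (eq_bigr (fun=> c)); last by move=> r ->.
rewrite [X in _ + X](eq_bigr (fun=> k)); last by move=> r /negbTE ->.
rewrite !sum_nat_const mulnC [k * _]mulnC; congr (_ * _ + _ * _).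
  by apply: eq_card => r; rewrite inE.
have -> : #|[pred i | ~~ A i]| = #|~: [set r | A r]| by apply: eq_card => r; rewrite !inE.
by rewrite -(cardsC [set r | A r]) addKn.
Qed.

Definition dirB n q (B : {set hvert n.+1 q}) : 'I_n.+1 :=
  odflt ord0 [pick i | [exists z, B == hline i z]].

Section Construction.
Variables (q : nat) (f : hvert q.+1 q -> bool) (P : {set {set hvert q.+1 q}}).
Hypothesis hpart : partition P (color_class f color2).
Hypothesis hlin : forall L, L \in P -> is_line L.

Definition dir (x : hvert q.+1 q) := dirB (pblock P x).

Lemma cover_col (x : hvert q.+1 q) : (x \in cover P) = (f x == false).
Proof. by case/and3P: hpart => /eqP -> _ _; rewrite inE. Qed.

Lemma dir_spec (x : hvert q.+1 q) : f x = false -> exists z, pblock P x = hline (dir x) z.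
Proof.
move=> fx; have hc : x \in cover P by rewrite cover_col fx.
have hB := pblock_mem hc.
have [i [z0 e]] := hlin hB.
rewrite /dir /dirB; case: pickP => [i' /existsP [z /eqP ->]|none]; first by exists z.
by have := none i; move/existsP; case; exists z0; rewrite e.
Qed.

Lemma line_lemma (x' x : hvert q.+1 q) : f x' = false -> (forall k, k != dir x' -> x k = x' k) ->
  f x = false /\ dir x = dir x'.
Proof.
move=> fx' hx; have [z ez] := dir_spec fx'.
have hc : x' \in cover P by rewrite cover_col fx'.
have hB := pblock_mem hc.
have hx'B : x' \in pblock P x' by rewrite mem_pblock.
have hxB : x \in pblock P x'.
  move: hx'B; rewrite ez !inE => /forallP hz; apply/forallP => k.
  apply/implyP => hk; rewrite hx //; exact: (implyP (hz k) hk).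
have triv : trivIset P by case/and3P: hpart.
have ep := def_pblock triv hB hxB.
split; last by rewrite /dir ep.
apply/eqP; rewrite -cover_col; apply/bigcupP; by exists (pblock P x').
Qed.


Variables (hq0 : 0 < q) (p t : nat) (htp : t < p).
Hypothesis F1 : forall x j r, f x = true -> r != x j -> f (upd x j r) = false.

Definition pi (y : hvert q.+1 (p * q)) : hvert q.+1 q := [ffun k => res hq0 (y k)].
Definition Ssum (i : 'I_q.+1) (y : hvert q.+1 (p * q)) : nat :=
  \sum_(k < q.+1 | k != i) (y k %/ q).
Definition Sx (i j : 'I_q.+1) (y : hvert q.+1 (p * q)) : nat :=
  \sum_(k < q.+1 | (k != i) && (k != j)) (y k %/ q).
Definition g (y : hvert q.+1 (p * q)) : bool :=
  f (pi y) || (Ssum (dir (pi y)) y %% p < t).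

Lemma pi_upd y j v : pi (upd y j v) = upd (pi y) j (res hq0 v).
Proof. by apply/ffunP => k; rewrite !ffunE; case: (k == j). Qed.

Lemma pi_mk y j r d : pi (upd y j (mk r d)) = upd (pi y) j r.
Proof. by rewrite pi_upd res_mk. Qed.

Lemma Ssum_same i y v : Ssum i (upd y i v) = Ssum i y.
Proof. by apply: eq_bigr => k hk; rewrite upd_agree. Qed.

Lemma Ssum_other i j y v : j != i -> Ssum i (upd y j v) = Sx i j y + v %/ q.
Proof.
move=> hji; rewrite /Ssum (bigD1 j) //= ffunE eqxx addnC; congr (_ + _).
by apply: eq_bigr => k /andP [_ hk]; rewrite upd_agree.
Qed.

Lemma Ssum_y i j y : j != i -> Ssum i y = Sx i j y + y j %/ q.
Proof. by move=> hji; rewrite -{1}(upd_id y j) Ssum_other. Qed.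

Lemma mk_neq y j (r : 'I_q) (d : 'I_p) : r != pi y j -> mk r d != y j.
Proof.
apply: contra => /eqP e; by rewrite ffunE -e res_mk.
Qed.

Lemma mk_neq_same y j (d : 'I_p) : (mk (pi y j) d != y j) = (d != quo hq0 (y j)).
Proof.
rewrite ffunE; set w := y j; by rewrite -{2}(mk_res_quo hq0 w) (inj_eq (@mk_inj _ _ _)).
Qed.


Definition cnt (y : hvert q.+1 (p * q)) (j : 'I_q.+1) (r : 'I_q) (b : bool) :=
  #|[set d : 'I_p | (mk r d != y j) && (g (upd y j (mk r d)) == b)]|.

Lemma nbr_g (y : hvert q.+1 (p * q)) b : #|[set z | hadj y z & g z == b]| = \sum_(j < q.+1) \sum_(r < q) cnt y j r b.
Proof.
rewrite (nbr_count y (fun z => g z == b)); apply: eq_bigr => j _.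
by rewrite (count_by_res hq0 (fun v => (v != y j) && (g (upd y j v) == b))).
Qed.

Lemma dir_ne (x : hvert q.+1 q) j r : r != x j -> f (upd x j r) = false ->
  dir (upd x j r) = j -> f x = false /\ dir x = j.
Proof.
move=> hr fx' e; rewrite -e; apply: line_lemma => // k; rewrite e => hk.
by rewrite upd_agree.
Qed.

Lemma cnt_code (y : hvert q.+1 (p * q)) j r : f (pi y) = true ->
  cnt y j r false = if r == pi y j then 0 else p - t.
Proof.
move=> fx; case: eqP => [->|/eqP hr].
  apply/eqP; rewrite cards_eq0; apply/eqP/setP => d.
  by rewrite !inE /g pi_mk upd_id fx andbF.
have fx' := F1 fx hr.
have hdj : j != dir (upd (pi y) j r).
  apply/eqP => e; have [] := dir_ne hr fx' (esym e); by rewrite fx.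
rewrite /cnt -(card_shiftC (Sx (dir (upd (pi y) j r)) j y) (ltnW htp)).
apply: eq_card => d; rewrite !inE mk_neq //= /g pi_mk fx' /= Ssum_other // (quo_mk hq0).
by case: (_ < t).
Qed.

Lemma cnt_line (y : hvert q.+1 (p * q)) r : f (pi y) = false -> cnt y (dir (pi y)) r (~~ g y) = 0.
Proof.
move=> fx; apply/eqP; rewrite cards_eq0; apply/eqP/setP => d; rewrite !inE.
have [fz dz] : f (pi (upd y (dir (pi y)) (mk r d))) = false /\
               dir (pi (upd y (dir (pi y)) (mk r d))) = dir (pi y).
  by apply: line_lemma => // k hk; rewrite pi_mk upd_agree.
have -> : g (upd y (dir (pi y)) (mk r d)) = g y.
  by rewrite /g fz fx dz Ssum_same.
by case: (g y); rewrite andbF.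
Qed.

Lemma cnt_same (y : hvert q.+1 (p * q)) j : f (pi y) = false -> j != dir (pi y) ->
  cnt y j (pi y j) (~~ g y) = if g y then p - t else t.
Proof.
move=> fx hj.
have hgy : g y = ((Sx (dir (pi y)) j y + quo hq0 (y j)) %% p < t).
  by rewrite /g fx /= (Ssum_y _ hj).
have e : forall d, (mk (pi y j) d != y j) && (g (upd y j (mk (pi y j) d)) == ~~ g y) =
   (d != quo hq0 (y j)) && (((Sx (dir (pi y)) j y + d) %% p < t) == ~~ g y).
  by move=> d; rewrite mk_neq_same /g pi_mk upd_id fx /= Ssum_other // (quo_mk hq0).
rewrite /cnt; case: (g y) hgy e => hgy e /=.
  rewrite -[RHS](card_shiftC1 (ltnW htp) (esym hgy)).
  by apply: eq_card => d; rewrite !inE e; case: (_ < t).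
rewrite -[RHS](card_shift1 (ltnW htp) (negbT (esym hgy))).
by apply: eq_card => d; rewrite !inE e; case: (_ < t).
Qed.

Lemma cnt_other (y : hvert q.+1 (p * q)) j r : f (pi y) = false -> j != dir (pi y) -> r != pi y j ->
  cnt y j r (~~ g y) = if f (upd (pi y) j r) then (if g y then 0 else p)
                       else (if g y then p - t else t).
Proof.
move=> fx hj hr; rewrite /cnt.
case fx' : (f (upd (pi y) j r)) => /=.
  case: (g y) => /=.
    by apply/eqP; rewrite cards_eq0; apply/eqP/setP => d; rewrite !inE mk_neq //= /g pi_mk fx'.
  rewrite -[RHS](card_ord p); apply: eq_card => d.
  by rewrite !inE mk_neq //= /g pi_mk fx'.
have hdj : j != dir (upd (pi y) j r).
  apply/eqP => e; have [_ e2] := dir_ne hr fx' (esym e); by rewrite e2 eqxx in hj.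
have e : forall d, (mk r d != y j) && (g (upd y j (mk r d)) == ~~ g y) =
   (((Sx (dir (upd (pi y) j r)) j y + d) %% p < t) == ~~ g y).
  by move=> d; rewrite mk_neq //= /g pi_mk fx' /= Ssum_other // (quo_mk hq0).
case: (g y) e => e /=.
  rewrite -[RHS](card_shiftC (Sx (dir (upd (pi y) j r)) j y) (ltnW htp)).
  by apply: eq_card => d; rewrite !inE e; case: (_ < t).
rewrite -[RHS](card_shift (Sx (dir (upd (pi y) j r)) j y) (ltnW htp)).
by apply: eq_card => d; rewrite !inE e; case: (_ < t).
Qed.


Hypothesis F2 : forall x, f x = false ->
  \sum_(j < q.+1) #|[set r | (r != x j) && f (upd x j r)]| = 1.

Lemma card_eq1 (T : finType) (a : T) : #|[set r | r == a]| = 1.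
Proof. by rewrite -(cards1 a); apply: eq_card => r; rewrite !inE. Qed.

Lemma G_code (y : hvert q.+1 (p * q)) : f (pi y) = true ->
  #|[set z | hadj y z & g z == false]| = (q ^ 2 - 1) * (p - t).
Proof.
move=> fx; rewrite nbr_g.
rewrite (eq_bigr (fun _ => (q - 1) * (p - t))); last first.
  move=> j _; rewrite (eq_bigr (fun r => if r == pi y j then 0 else p - t)); last first.
    by move=> r _; rewrite cnt_code.
  by rewrite sum_if_card card_eq1 card_ord mul0n add0n mulnC.
rewrite sum_nat_const card_ord.
have h1 : q.+1 * (q - 1) = q ^ 2 - 1 by rewrite -mulnn; nia.
by rewrite mulnA h1.
Qed.


Lemma G_col2 (y : hvert q.+1 (p * q)) : f (pi y) = false ->
  #|[set z | hadj y z & g z == ~~ g y]| =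
  if g y then (q ^ 2 - 1) * (p - t) else (q ^ 2 - 1) * t + p.
Proof.
move=> fx; rewrite nbr_g.
set x := pi y; set i := dir x.
pose N j := #|[set r | (r != x j) && f (upd x j r)]|.
pose cb := if g y then 0 else p.
pose kb := if g y then p - t else t.
have hNi : N i = 0.
  apply/eqP; rewrite cards_eq0; apply/eqP/setP => r; rewrite !inE.
  case: (eqVneq r (x i)) => //= hr.
  have [fz _] := line_lemma (x' := x) (x := upd x i r) fx (fun k hk => upd_agree _ _ hk).
  by rewrite fz.
have hNq : forall j, N j <= q by move=> j; rewrite -[X in _ <= X](card_ord q) max_card.
have hsum : \sum_(j < q.+1) N j = 1 by apply: F2.
rewrite (eq_bigr (fun j => if j == i then 0 else cb * N j + kb * (q - N j))); last first.
  move=> j _; case: (eqVneq j i) => [->|hj].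
    by apply: big1 => r _; apply: cnt_line.
  rewrite (eq_bigr (fun r => if (r != x j) && f (upd x j r) then cb else kb)).
    by rewrite sum_if_card card_ord.
  move=> r _; case: (eqVneq r (x j)) => [->|hr] /=.
    by rewrite cnt_same.
  by rewrite cnt_other //; case: (f _).
set T := \sum_(j < q.+1) _.
have key : T + kb * \sum_(j < q.+1) N j = cb * \sum_(j < q.+1) N j + kb * q * q.
  rewrite !big_distrr /= -big_split /=.
  rewrite (eq_bigr (fun j => cb * N j + (if j == i then 0 else kb * q))); last first.
    move=> j _; case: (eqVneq j i) => [->|hj]; first by rewrite hNi !muln0.
    by have := hNq j => h; rewrite -addnA -mulnDr subnK.
  rewrite big_split /= sum_if_card card_ord card_eq1 mul0n add0n subSS subn0.
  by [].
rewrite hsum !muln1 in key.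
rewrite /cb /kb in key; case: (g y) key => key.
  rewrite -mulnn; nia.
rewrite -mulnn; nia.
Qed.


End Construction.

Lemma card_neq (T : finType) (a : T) : #|[set r | r != a]| = #|T|.-1.
Proof. by rewrite -(cardsC1 a); apply: eq_card => r; rewrite !inE. Qed.

Unset Implicit Arguments.

Theorem theorem8 (q : nat) (hq : 2 <= q) (f : hvert q.+1 q -> bool)
  (hf : is_bc_coloring f (q ^ 2 - 1) 1)
  (hcode : perfect_code1 (color_class f color1))
  (hlines : line_partitionable (color_class f color2)) :
  forall p t : nat, 0 < p -> t < p ->
    exists g : hvert q.+1 (p * q) -> bool,
      is_bc_coloring g ((q ^ 2 - 1) * (p - t)) ((q ^ 2 - 1) * t + p) /\
      main_eigenvalue q.+1 (p * q) ((q ^ 2 - 1) * (p - t)) ((q ^ 2 - 1) * t + p)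
        = ((q%:Z * (p%:Z - 1) - 1)%R).
Proof.
move=> p t hp htp.
have hq0 : 0 < q by apply: leq_trans hq.
case: hlines => P [hpart hlin].
case: hf => [[x0 fx0] _ hb hc].
have nbr_all : forall x : hvert q.+1 q, #|[set y | hadj x y & true]| = q ^ 2 - 1.
  move=> x; rewrite (nbr_count x (fun _ => true)).
  rewrite (eq_bigr (fun _ => q - 1)); last first.
    move=> j _; rewrite subn1 -[in RHS](card_ord q) -(card_neq (x j)); by apply: eq_card => r; rewrite !inE andbT.
  rewrite sum_nat_const card_ord -mulnn; nia.
have F1 : forall x j r, f x = true -> r != x j -> f (upd x j r) = false.
  move=> x j r fx hr; apply/negbTE/negP => fx'.
  have hA : [set y | hadj x y & f y == color2] \proper [set y | hadj x y & true].
    apply/properP; split.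
      by apply/subsetP => y; rewrite !inE => /andP [-> _].
    by exists (upd x j r); rewrite !inE hadj_upd // fx'.
  by have := proper_card hA; rewrite hb // nbr_all ltnn.
have F2 : forall x, f x = false ->
    \sum_(j < q.+1) #|[set r | (r != x j) && f (upd x j r)]| = 1.
  move=> x fx; rewrite -(hc x fx) (nbr_count x (fun z => f z == color1)).
  by apply: eq_bigr => j _; apply: eq_card => r; rewrite !inE /color1 eqb_id.
exists (g f P hq0 t).
split; last first.
  rewrite /main_eigenvalue.
  have e : ((q ^ 2 - 1) * (p - t) + ((q ^ 2 - 1) * t + p) = p * q * q)%N.
    rewrite -mulnn; nia.
  rewrite -PoszD e !PoszM.
  nia.
pose d0 : 'I_p := Ordinal hp.
pose y0 : hvert q.+1 (p * q) := [ffun k => mk (x0 k) d0].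
have py0 : pi hq0 y0 = x0 by apply/ffunP => k; rewrite !ffunE res_mk.
have gy0 : g f P hq0 t y0 = true by rewrite /g py0 fx0.
have Gc := G_code hpart hlin (hq0:=hq0) htp F1.
have G2 := G_col2 hpart hlin (hq0:=hq0) htp F2.
split.
- by exists y0.
- have h := Gc y0 (etrans (congr1 f py0) fx0).
  have : 0 < #|[set z | hadj y0 z & g f P hq0 t z == false]|.
    rewrite h -mulnn; nia.
  rewrite card_gt0 => /set0Pn [z]; rewrite inE => /andP [_ /eqP gz].
  by exists z.
- move=> y gy; case fy : (f (pi hq0 y)); first exact: Gc.
  by have := G2 _ fy; rewrite gy.
- move=> y gy; have fy : f (pi hq0 y) = false by move: gy; rewrite /g; case: (f _).
  by have := G2 _ fy; rewrite gy.
Qed.
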